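(* Let $K$ be a field of characteristic $0$, let $S=K[x_1,\ldots,x_n]$ be graded by $\deg x_i=a_i>0$, and let $I\subset S$ be a homogeneous unmixed ideal of height two. Suppose that the symbolic Rees algebra $\bigoplus_{k\ge0} I^{(k)}t^k\subseteq S[t]$ is generated in degrees $1$ and $2$, and that $(I^{(2)})^2\subseteq I^3$. Then $(I^{(k-1)})^2\subseteq I^k$ for all $k\ge2$.
   Context: The $m$-th symbolic power is $I^{(m)}=\bigcup_{t\ge1} I^m:L^t$, where $L$ is the intersection of all associated, non-minimal prime ideals of $I^m$; $I^{(0)}=S$. *)

(* Defs.v *)
From HB Require Import structures.
From mathcomp Require Import all_boot all_order all_algebra.
From mathcomp Require Import mpoly.
Set Implicit Arguments. Unset Strict Implicit. Unset Printing Implicit Defensive.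
Import Order.TTheory GRing.Theory.
Local Open Scope ring_scope.

Section IdealDefs.
Variables (n : nat) (K : fieldType).
Local Notation S := {mpoly K[n]}.

Definition sub_set (A B : S -> Prop) : Prop := forall x, A x -> B x.
Definition set_eq (A B : S -> Prop) : Prop := forall x, A x <-> B x.
Definition full_set : S -> Prop := fun _ => True.

Definition is_ideal (I : S -> Prop) : Prop :=
  [/\ I 0, (forall x y, I x -> I y -> I (x + y)) & (forall r x, I x -> I (r * x))].

Definition ideal_mul (I J : S -> Prop) : S -> Prop := fun x =>
  exists s : seq (S * S),
    (forall p, p \in s -> I p.1 /\ J p.2) /\ x = \sum_(p <- s) p.1 * p.2.

Fixpoint ideal_pow (I : S -> Prop) (k : nat) : S -> Prop :=
  match k with
  | 0 => full_set
  | k'.+1 => ideal_mul (ideal_pow I k') I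
  end.

Definition ideal_sum (l : seq (S -> Prop)) : S -> Prop :=
  foldr (fun J acc x => exists y z, J y /\ acc z /\ x = y + z)
        (fun x => x = 0) l.

Definition colon (I J : S -> Prop) : S -> Prop := fun x => forall y, J y -> I (x * y).

Definition is_prime (P : S -> Prop) : Prop :=
  [/\ is_ideal P, ~ P 1 & (forall x y, P (x * y) -> P x \/ P y)].

Definition assoc_prime (J P : S -> Prop) : Prop :=
  is_prime P /\ exists f : S, set_eq P (colon J (fun y => y = f)).

Definition minimal_prime (J P : S -> Prop) : Prop :=
  [/\ is_prime P, sub_set J P &
      (forall Q, is_prime Q -> sub_set J Q -> sub_set Q P -> sub_set P Q)].

(* intersection of all associated, non-minimal primes of J (= S if none) *)
Definition embedded_intersection (J : S -> Prop) : S -> Prop := fun x =>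
  forall P, assoc_prime J P -> ~ minimal_prime J P -> P x.

Definition symbolic_power (I : S -> Prop) (m : nat) : S -> Prop :=
  match m with
  | 0 => full_set
  | _ => fun x => exists t : nat,
           colon (ideal_pow I m) (ideal_pow (embedded_intersection (ideal_pow I m)) t) x
  end.

Definition prime_height_ge (P : S -> Prop) (h : nat) : Prop :=
  exists c : nat -> S -> Prop,
    [/\ (forall i, (i <= h)%N -> is_prime (c i)),
        (forall i, (i < h)%N -> sub_set (c i) (c i.+1) /\ ~ sub_set (c i.+1) (c i))
      & set_eq (c h) P].

Definition prime_height (P : S -> Prop) (h : nat) : Prop :=
  prime_height_ge P h /\ ~ prime_height_ge P h.+1.

Definition ideal_height (I : S -> Prop) (h : nat) : Prop :=
  (exists P, is_prime P /\ sub_set I P /\ prime_height P h) /\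
  (forall P, is_prime P -> sub_set I P -> prime_height_ge P h).

Definition unmixed (I : S -> Prop) : Prop :=
  forall h, ideal_height I h -> forall P, assoc_prime I P -> prime_height P h.

Definition wdeg (a : 'I_n -> nat) (m : 'X_{1..n}) : nat := (\sum_(i < n) a i * m i)%N.

Definition whomog (a : 'I_n -> nat) (p : S) : Prop :=
  exists d : nat, forall m, m \in msupp p -> wdeg a m = d.

Definition homogeneous_ideal (a : 'I_n -> nat) (I : S -> Prop) : Prop :=
  forall f, I f -> exists s : seq (S * S),
    (forall p, p \in s -> I p.2 /\ whomog a p.2) /\ f = \sum_(p <- s) p.1 * p.2.

(* the symbolic Rees algebra is generated in degrees 1 and 2:
   I^(k) = sum_{i + 2j = k} (I^(1))^i (I^(2))^j for all k *)
Definition symb_rees_gen_deg12 (I : S -> Prop) : Prop :=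
  forall k : nat, set_eq (symbolic_power I k)
    (ideal_sum [seq ideal_mul (ideal_pow (symbolic_power I 1) (k - 2 * j))
                              (ideal_pow (symbolic_power I 2) j)
               | j <- iota 0 (k./2).+1]).

End IdealDefs.

(* Main.v *)
Require Import Defs.
From HB Require Import structures.
From mathcomp Require Import all_boot all_order all_algebra.
From mathcomp Require Import mpoly.
From mathcomp Require Import ring zify.
From Stdlib Require Import ClassicalEpsilon Classical.
Import Order.TTheory GRing.Theory.
Local Open Scope ring_scope.



Lemma nat_min_after (h : nat -> nat) a :
  exists j, (a < j)%N /\ forall j', (a < j')%N -> (h j <= h j')%N.
Proof.
suff H : forall v j, (a < j)%N -> (h j <= v)%N ->
  exists j, (a < j)%N /\ forall j', (a < j')%N -> (h j <= h j')%N.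
  by apply: (H (h a.+1) a.+1).
elim=> [|v IH] j aj hj.
  by exists j; split=> // j' _; exact: leq_trans hj (leq0n _).
case: (classic (exists j', (a < j')%N /\ (h j' < h j)%N)) => [[j' [aj' hj']]|H].
  by apply: (IH j' aj'); rewrite -ltnS (leq_trans hj' hj).
exists j; split=> // j' aj'; rewrite leqNgt; apply/negP=> hlt; apply: H.
by exists j'.
Qed.

Lemma nat_subseq (h : nat -> nat) : exists psi : nat -> nat,
  (forall i, (psi i < psi i.+1)%N) /\ (forall i, (h (psi i) <= h (psi i.+1))%N).
Proof.
pose nxt a := proj1_sig (constructive_indefinite_description _ (nat_min_after h a)).
have Hn a : (a < nxt a)%N /\ forall j', (a < j')%N -> (h (nxt a) <= h j')%N.
  by rewrite /nxt; case: constructive_indefinite_description.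
exists (fun i => iter i.+1 nxt 0%N); split=> i.
  exact: (Hn _).1.
apply: (Hn (iter i nxt 0%N)).2.
exact: ltn_trans (Hn _).1 (Hn _).1.
Qed.

Lemma mono_step (f : nat -> nat) : (forall i, (f i < f i.+1)%N) ->
  forall i j, (i < j)%N -> (f i < f j)%N.
Proof.
move=> H i j; elim: j => // j IH; rewrite ltnS leq_eqVlt => /orP[/eqP->|/IH h].
  exact: H.
exact: ltn_trans h (H j).
Qed.

Lemma nondec_step (f : nat -> nat) : (forall i, (f i <= f i.+1)%N) ->
  forall i j, (i <= j)%N -> (f i <= f j)%N.
Proof.
move=> H i j; elim: j => [|j IH]; first by rewrite leqn0 => /eqP->.
rewrite leq_eqVlt => /orP[/eqP->//|]; rewrite ltnS => /IH h.
exact: leq_trans h (H j).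
Qed.

Lemma dickson_gen (T : eqType) (g : nat -> T -> nat) (s : seq T) :
  exists phi : nat -> nat, (forall i j, (i < j)%N -> (phi i < phi j)%N) /\
    (forall c, c \in s -> forall i j, (i <= j)%N -> (g (phi i) c <= g (phi j) c)%N).
Proof.
elim: s => [|c s [phi [Hp Hs]]].
  by exists id; split.
have [psi [Hpsi1 Hpsi2]] := nat_subseq (fun i => g (phi i) c).
have Mpsi := @mono_step psi Hpsi1.
exists (fun i => phi (psi i)); split.
  by move=> i j ij; apply: Hp; apply: Mpsi.
move=> c'; rewrite inE => /orP[/eqP->|cs] i j ij.
  exact: (@nondec_step (fun i => g (phi (psi i)) c) Hpsi2 _ _ ij).
apply: Hs => //; rewrite leq_eqVlt in ij; case/orP: ij => [/eqP->//|ij].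
exact: ltnW (Mpsi _ _ ij).
Qed.

Lemma dickson n (f : nat -> 'X_{1..n}) : exists i j, (i < j)%N /\ (f i <= f j)%MM.
Proof.
have [phi [Hp Hs]] := @dickson_gen _ (fun i (c : 'I_n) => f i c) (enum 'I_n).
exists (phi 0%N), (phi 1%N); split; first exact: Hp.
by apply/mnm_lepP => c; apply: Hs; rewrite ?mem_enum.
Qed.

Section Noeth.
Variables (n : nat) (K : fieldType).
Local Notation S := {mpoly K[n]}.

Definition LM (J : S -> Prop) (m : 'X_{1..n}) := exists f, [/\ J f, f != 0 & mlead f = m].

Lemma mpolyX_neq0 (m : 'X_{1..n}) : ('X_[m] : S) != 0.
Proof.
apply/negP=> /eqP h; have := @mcoeffX n K m m; rewrite h mcoeff0 eqxx => /eqP.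
by rewrite eq_sym oner_eq0.
Qed.

Lemma LM_up J (hJ : is_ideal J) m m' : LM J m -> (m <= m')%MM -> LM J m'.
Proof.
case: hJ => J0 JD JM [f [Jf fn0 fm]] le.
exists ('X_[m' - m] * f); split.
- exact: JM.
- by rewrite mulf_neq0 // mpolyX_neq0.
- by rewrite mleadM ?mpolyX_neq0 // mleadXm fm submK.
Qed.

Lemma LM_eq J J' : is_ideal J -> is_ideal J' -> sub_set J J' ->
  (forall m, LM J' m -> LM J m) -> sub_set J' J.
Proof.
move=> hJ hJ' sJ sLM.
case: hJ => J0 JD JM; case: hJ' => J'0 J'D J'M.
have H : forall m f, J' f -> f != 0 -> mlead f = m -> J f.
  elim/(well_founded_ind (@ltom_wf n)) => m IH f Jf fn0 fm.
  have [g [Jg gn0 gm]] : LM J m by apply: sLM; exists f.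
  pose c := mleadc f / mleadc g.
  pose h := f - c *: g.
  have gc : mleadc g != 0 by rewrite mleadc_eq0.
  have fc : mleadc f != 0 by rewrite mleadc_eq0.
  have cn0 : c != 0 by rewrite /c mulf_neq0 ?invr_eq0.
  have Jcg : J (c *: g) by rewrite -mul_mpolyC; apply: JM.
  have Jh' : J' h.
    rewrite /h -scaleNr -mul_mpolyC; apply: J'D => //; apply: J'M; exact: sJ.
  have -> : f = h + c *: g by rewrite /h subrK.
  case: (eqVneq h 0) => [->|hn0]; first by rewrite add0r.
  apply: JD => //; apply: (IH (mlead h)) => //.
  have hm : h@_m = 0.
    by rewrite /h mcoeffB mcoeffZ -{1}fm -gm /c divfK // subrr.
  rewrite lt_neqAle; apply/andP; split.
    apply/eqP => E; move: hn0; rewrite -mleadc_eq0 E hm eqxx; by [].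
  by have := mleadB_le f (c *: g); rewrite mleadZ // gm fm joinxx.
move=> f J'f; case: (eqVneq f 0) => [->|fn0]; first exact: J0.
exact: H _ f J'f fn0 erefl.
Qed.

Lemma noeth (F : (S -> Prop) -> Prop) : (forall N, F N -> is_ideal N) ->
  (exists N, F N) -> exists M, F M /\ forall N, F N -> sub_set M N -> sub_set N M.
Proof.
move=> Fid [M0 FM0]; apply: NNPP => Hno.
have step : forall M : {M | F M}, exists N : {M | F M},
    sub_set (sval M) (sval N) /\ ~ sub_set (sval N) (sval M).
  case=> M FM /=; apply: NNPP => H; apply: Hno; exists M; split=> // N FN sMN.
  apply: NNPP => nsNM; apply: H; by exists (exist _ N FN).
pose nxt M := sval (constructive_indefinite_description _ (step M)).
have Hnxt M : sub_set (sval M) (sval (nxt M)) /\ ~ sub_set (sval (nxt M)) (sval M).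
  by rewrite /nxt; case: constructive_indefinite_description.
pose C i := sval (iter i nxt (exist _ M0 FM0)).
have Cid i : is_ideal (C i) by apply: Fid; exact: svalP.
have Cmono i j : (i <= j)%N -> sub_set (C i) (C j).
  elim: j => [|j IH]; first by rewrite leqn0 => /eqP-> x.
  rewrite leq_eqVlt => /orP[/eqP-> x //|]; rewrite ltnS => /IH h x /h.
  exact: (Hnxt _).1.
have Hm i : exists m, LM (C i.+1) m /\ ~ LM (C i) m.
  apply: NNPP => H; apply: (Hnxt (iter i nxt (exist _ M0 FM0))).2.
  apply: (@LM_eq (C i) (C i.+1) (Cid i) (Cid i.+1) (Hnxt (iter i nxt (exist _ M0 FM0))).1) => m Lm.
  apply: NNPP => nL; apply: H; by exists m.
pose mm i := sval (constructive_indefinite_description _ (Hm i)).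
have Hmm i : LM (C i.+1) (mm i) /\ ~ LM (C i) (mm i).
  by rewrite /mm; case: constructive_indefinite_description.
have [i [j [ij le]]] := @dickson n mm.
apply: (Hmm j).2; apply: (@LM_up (C j) (Cid j) (mm i) (mm j) _ le).
have [f [Cf f0 fm]] := (Hmm i).1; exists f; split=> //.
exact: (Cmono _ _ ij).
Qed.

End Noeth.



Section Alg.
Set Implicit Arguments. Unset Strict Implicit.
Variables (n : nat) (K : fieldType).
Local Notation S := {mpoly K[n]}.
Implicit Types A B C D I X : S -> Prop.

Lemma full_ideal : is_ideal (@full_set n K).
Proof. by []. Qed.

Lemma sum_in C (T : eqType) (s : seq T) (F : T -> S) : is_ideal C ->
  (forall p, p \in s -> C (F p)) -> C (\sum_(p <- s) F p).
Proof.
case=> C0 CD _; elim: s => [|p s IH] H; first by rewrite big_nil.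
rewrite big_cons; apply: CD; first by apply: H; rewrite inE eqxx.
by apply: IH => q qs; apply: H; rewrite inE qs orbT.
Qed.

Lemma ideal_mul_ideal A B : (forall r x, A x -> A (r * x)) -> is_ideal (ideal_mul A B).
Proof.
move=> AM; split.
- by exists [::]; rewrite big_nil.
- move=> x y [s1 [H1 ->]] [s2 [H2 ->]]; exists (s1 ++ s2); split.
    by move=> p; rewrite mem_cat => /orP[/H1|/H2].
  by rewrite big_cat.
- move=> r x [s [H ->]]; exists [seq (r * p.1, p.2) | p <- s]; split.
    move=> p /mapP [q qs ->] /=; have [h1 h2] := H q qs; split=> //; exact: AM.
  by rewrite big_map mulr_sumr; apply: eq_bigr => p _ /=; rewrite mulrA.
Qed.

Lemma pow_ideal A k : is_ideal (ideal_pow A k).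
Proof.
elim: k => [|k IH] //=; apply: ideal_mul_ideal; by case: IH.
Qed.

Lemma mul_single A B a b : A a -> B b -> ideal_mul A B (a * b).
Proof.
move=> Aa Bb; exists [:: (a, b)]; split; last by rewrite big_seq1.
by move=> p; rewrite inE => /eqP->.
Qed.

Lemma mul_sub_l C A B x y : is_ideal C ->
  (forall a b, A a -> B b -> C (x * (a * b))) -> ideal_mul A B y -> C (x * y).
Proof.
move=> hC H [s [Hs ->]]; rewrite mulr_sumr; apply: sum_in => // p ps.
by have [] := Hs p ps; apply: H.
Qed.

Lemma mul_sub_r C A B x y : is_ideal C ->
  (forall a b, A a -> B b -> C ((a * b) * y)) -> ideal_mul A B x -> C (x * y).
Proof.
move=> hC H hx; rewrite mulrC; apply: (mul_sub_l hC) hx => a b Aa Bb.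
by rewrite mulrC; apply: H.
Qed.

Lemma mul_sub C A B : is_ideal C ->
  (forall a b, A a -> B b -> C (a * b)) -> sub_set (ideal_mul A B) C.
Proof.
move=> hC H x hx; rewrite -[x]mul1r; apply: (mul_sub_l hC) hx => a b Aa Bb.
by rewrite mul1r; apply: H.
Qed.

Lemma mul_mono A A' B B' : sub_set A A' -> sub_set B B' ->
  sub_set (ideal_mul A B) (ideal_mul A' B').
Proof.
move=> sA sB x [s [Hs ->]]; exists s; split=> // p ps.
by have [h1 h2] := Hs p ps; split; [apply: sA | apply: sB].
Qed.

Lemma pow_mul A p q x y : ideal_pow A p x -> ideal_pow A q y ->
  ideal_pow A (p + q) (x * y).
Proof.
elim: q y => [|q IH] y hx hy.
  by rewrite addn0 mulrC; case: (pow_ideal A p) => _ _; apply.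
rewrite addnS /=; apply: (mul_sub_l (pow_ideal A (p + q).+1)) hy => a b Aa Bb.
by rewrite mulrA; apply: mul_single => //; apply: IH.
Qed.

Lemma pow_mono_base A B k : sub_set A B -> sub_set (ideal_pow A k) (ideal_pow B k).
Proof.
move=> sAB; elim: k => [|k IH] //=; apply: mul_mono => //.
Qed.

Lemma mul_subl A B : is_ideal A -> sub_set (ideal_mul A B) A.
Proof.
move=> hA; apply: mul_sub => // a b Aa _; rewrite mulrC.
by case: hA => _ _; apply.
Qed.

Lemma pow_mono_exp A p q : (p <= q)%N -> sub_set (ideal_pow A q) (ideal_pow A p).
Proof.
elim: q => [|q IH]; first by rewrite leqn0 => /eqP-> x.
rewrite leq_eqVlt => /orP[/eqP-> x //|]; rewrite ltnS => /IH h x hx.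
by apply: h; apply: (mul_subl (pow_ideal A q)) hx.
Qed.

Lemma mul_pairs A B C D a c : (forall r x, A x -> A (r * x)) ->
  ideal_mul A B a -> ideal_mul C D c ->
  ideal_mul (ideal_mul A C) (ideal_mul B D) (a * c).
Proof.
move=> AM ha hc.
have AC : forall r x, ideal_mul A C x -> ideal_mul A C (r * x).
  by case: (ideal_mul_ideal C AM).
have hZ := ideal_mul_ideal (ideal_mul B D) AC.
apply: (mul_sub_r hZ) ha => a1 b1 Aa Bb.
apply: (mul_sub_l hZ) hc => c1 d1 Cc Dd.
have -> : a1 * b1 * (c1 * d1) = (a1 * c1) * (b1 * d1) by ring.
by apply: mul_single; apply: mul_single.
Qed.

Lemma pow_elem A y t : A y -> ideal_pow A t (y ^+ t).
Proof.
move=> Ay; elim: t => [|t IH] //=; rewrite exprSr; exact: mul_single.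
Qed.

Lemma prime_pow (Q : S -> Prop) (y : S) t : is_prime Q -> Q (y ^+ t) -> Q y.
Proof.
case=> _ Q1 Qp; elim: t => [|t IH]; first by rewrite expr0.
by rewrite exprS => /Qp [|/IH].
Qed.

Lemma colon1 X f z : colon X (fun y => y = f) z <-> X (z * f).
Proof. by split=> [H|H y ->]; [apply: H|]. Qed.

Lemma colon_ideal X J : is_ideal X -> is_ideal (colon X J).
Proof.
case=> X0 XD XM; split.
- by move=> y _; rewrite mul0r.
- by move=> x y hx hy z Jz; rewrite mulrDl; apply: XD; [apply: hx|apply: hy].
- by move=> r x hx z Jz; rewrite -mulrA; apply: XM; apply: hx.
Qed.

End Alg.



Section Key.
Set Implicit Arguments. Unset Strict Implicit.
Variables (n : nat) (K : fieldType).
Local Notation S := {mpoly K[n]}.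
Implicit Types A B C D I X P Q : S -> Prop.

Lemma height_ext Q' Q P : prime_height_ge Q' 2 -> is_prime Q -> sub_set Q' P ->
  sub_set P Q -> ~ sub_set P Q' -> prime_height_ge Q 3.
Proof.
move=> [c [cp cs ce]] pQ sQ'P sPQ nPQ'.
exists (fun i => if (i <= 2)%N then c i else Q); split.
- by move=> i; case: ifP => h _ //; apply: cp.
- case=> [|[|[|i]]] //= _; try exact: cs.
  split.
    by move=> x /ce /sQ'P /sPQ.
  move=> h; apply: nPQ' => x /sPQ /h /ce; by [].
- by [].
Qed.

Lemma key_sub I X x t : is_ideal I -> unmixed I -> ideal_height I 2 ->
  is_ideal X -> sub_set X I ->
  (forall Q, is_prime Q -> sub_set X Q -> sub_set I Q) ->
  (forall y, ideal_pow (embedded_intersection X) t y -> X (x * y)) -> I x.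
Proof.
move=> hI hun hh hX sXI hrad hx.
have [I0 ID IM] := hI; have [X0 XD XM] := hX.
apply: NNPP => nIx.
pose F := fun N => exists g, ~ I (x * g) /\ N = colon I (fun y => y = x * g).
have Fid N : F N -> is_ideal N by move=> [g [_ ->]]; apply: colon_ideal.
have [M [[g0 [nIg0 ->]] Mmax]] : exists M, F M /\ forall N, F N -> sub_set M N -> sub_set N M.
  by apply: noeth => //; exists (colon I (fun y => y = x * 1)); exists 1; rewrite mulr1.
set Q := colon I (fun y => y = x * g0).
have pQ : is_prime Q.
  split; first exact: colon_ideal.
    by move=> /colon1; rewrite mul1r.
  move=> a b Qab; case: (classic (Q a)) => Qa; [by left | right].
  have FN : F (colon I (fun y => y = x * (g0 * a))).
    exists (g0 * a); split=> //.
    move=> h; apply: Qa; apply/colon1.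
    by have -> : a * (x * g0) = x * (g0 * a) by ring.
  have sub : sub_set Q (colon I (fun y => y = x * (g0 * a))).
    move=> z /colon1 hz; apply/colon1.
    have -> : z * (x * (g0 * a)) = a * (z * (x * g0)) by ring.
    exact: IM.
  apply: (Mmax _ FN sub); apply/colon1.
  have -> : b * (x * (g0 * a)) = a * b * (x * g0) by ring.
  exact/colon1.
have aQ : assoc_prime I Q by split=> //; exists (x * g0).
have hQ := hun 2%N hh Q aQ.
set L := embedded_intersection X.
have LQ : forall y, ideal_pow L t y -> Q y.
  move=> y /hx /sXI hy; apply/colon1.
  have -> : y * (x * g0) = g0 * (x * y) by ring.
  exact: IM.
pose F2 := fun N => exists s, ~ Q s /\ N = colon X (fun y => y = s).
have F2id N : F2 N -> is_ideal N by move=> [s [_ ->]]; apply: colon_ideal.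
have nQ1 : ~ Q 1 by case: pQ.
have [M2 [[s0 [nQs0 ->]] M2max]] : exists M, F2 M /\ forall N, F2 N -> sub_set M N -> sub_set N M.
  by apply: noeth => //; exists (colon X (fun y => y = 1)); exists 1.
have Ls0 : L s0.
  move=> P [pP [f Pf]] nmin.
  have XP : sub_set X P.
    by move=> y Xy; apply/Pf => z ->; rewrite mulrC; apply: XM.
  have [u [Pu nQu]] : exists u, P u /\ ~ Q u.
    apply: NNPP => H.
    have sPQ : sub_set P Q by move=> u Pu; apply: NNPP => nQu; apply: H; exists u.
    have [Q' [pQ' XQ' Q'P nPQ']] : exists Q', [/\ is_prime Q', sub_set X Q', sub_set Q' P & ~ sub_set P Q'].
      apply: NNPP => H2; apply: nmin; split=> // Q' pQ' XQ' Q'P.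
      apply: NNPP => nPQ'; apply: H2; by exists Q'.
    have h2 := hh.2 Q' pQ' (hrad Q' pQ' XQ').
    exact: hQ.2 (height_ext h2 pQ Q'P sPQ nPQ').
  have Xuf : X (u * f) by have := (Pf u).1 Pu; apply.
  have pQ0 := pQ; case: pQ0 => _ _ Qp.
  have FN : F2 (colon X (fun y => y = s0 * u)).
    by exists (s0 * u); split=> // /Qp [].
  have sub : sub_set (colon X (fun y => y = s0)) (colon X (fun y => y = s0 * u)).
    move=> z /colon1 hz; apply/colon1; rewrite mulrA mulrC; exact: XM.
  have /colon1 fs0 : colon X (fun y => y = s0) f.
    apply: (M2max _ FN sub); apply/colon1.
    have -> : f * (s0 * u) = s0 * (u * f) by ring.
    exact: XM.
  by apply/Pf => z ->; rewrite mulrC.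
apply: nQs0; apply: (prime_pow pQ); apply: LQ; exact: pow_elem.
Qed.

End Key.



Section Fin.
Set Implicit Arguments. Unset Strict Implicit.
Variables (n : nat) (K : fieldType).
Local Notation S := {mpoly K[n]}.

Lemma sum_sub (T : eqType) (s : seq T) (F : T -> S -> Prop) (Pr : S -> Prop) :
  Pr 0 -> (forall a b, Pr a -> Pr b -> Pr (a + b)) ->
  (forall j, j \in s -> sub_set (F j) Pr) -> sub_set (ideal_sum (map F s)) Pr.
Proof.
move=> P0 PD; elim: s => [|j s IH] H x /=; first by move->.
move=> [y [z [Fy [Sz ->]]]]; apply: PD.
  by apply: (H j) => //; rewrite inE eqxx.
by apply: IH => // j' hj'; apply: H; rewrite inE hj' orbT.
Qed.

Lemma J2pow (I J2 : S -> Prop) : sub_set J2 I ->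
  sub_set (ideal_pow J2 2) (ideal_pow I 3) ->
  forall Q, sub_set (ideal_pow J2 Q) (ideal_pow I (Q + Q./2)).
Proof.
move=> J2I h22.
suff H : forall Q, sub_set (ideal_pow J2 Q) (ideal_pow I (Q + Q./2)) /\
                   sub_set (ideal_pow J2 Q.+1) (ideal_pow I (Q.+1 + Q.+1./2)).
  by move=> Q; case: (H Q).
elim=> [|Q [IH1 IH2]].
  by split=> //=; apply: mul_mono.
split=> //.
have -> : (Q.+2 + Q.+2./2 = (Q + Q./2) + 3)%N by rewrite /=; lia.
move=> x /=.
apply: (mul_sub (pow_ideal I (Q + Q./2 + 3))) => u b hu Jb.
apply: (mul_sub_r (pow_ideal I (Q + Q./2 + 3))) hu => v c hv Jc.
rewrite -mulrA; apply: pow_mul; first exact: IH1.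
apply: h22; apply: mul_single => //; rewrite -[c]mul1r; exact: mul_single.
Qed.

End Fin.

Theorem proposition2p9 (K : fieldType) (n : nat) (a : 'I_n -> nat)
  (I : {mpoly K[n]} -> Prop) :
  [pchar K] =i pred0 ->
  (forall i, (0 < a i)%N) ->
  is_ideal I ->
  homogeneous_ideal a I ->
  unmixed I ->
  ideal_height I 2 ->
  symb_rees_gen_deg12 I ->
  sub_set (ideal_pow (symbolic_power I 2) 2) (ideal_pow I 3) ->
  forall k : nat, (2 <= k)%N ->
    sub_set (ideal_pow (symbolic_power I k.-1) 2) (ideal_pow I k).
Proof.
move=> _ _ hI _ hun hh hgen h22 k k2.
have hI' := hI; case: hI' => I0 ID IM.
have sX1I : sub_set (ideal_pow I 1) I.
  by apply: mul_sub => // a0 b _ Ib; exact: IM.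
have sX2I : sub_set (ideal_pow I 2) I.
  by move=> x /(@pow_mono_exp n K I 1 2 isT) h; apply: sX1I; apply: h.
have rad m : forall Q, is_prime Q -> sub_set (ideal_pow I m) Q -> sub_set I Q.
  by move=> Q pQ sQ y Iy; apply: (prime_pow (t:=m) pQ); apply: sQ; apply: pow_elem.
have J1I : sub_set (symbolic_power I 1) I.
  move=> x [t hx]; exact: (key_sub hI hun hh (pow_ideal I 1) sX1I (rad 1%N) hx).
have J2I : sub_set (symbolic_power I 2) I.
  move=> x [t hx]; exact: (key_sub hI hun hh (pow_ideal I 2) sX2I (rad 2%N) hx).
have hJ2 := J2pow J2I h22.
set Y := symbolic_power I k.-1.
have core : forall j j', j \in iota 0 (k.-1./2).+1 -> j' \in iota 0 (k.-1./2).+1 ->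
   forall y z,
   ideal_mul (ideal_pow (symbolic_power I 1) (k.-1 - 2 * j)) (ideal_pow (symbolic_power I 2) j) y ->
   ideal_mul (ideal_pow (symbolic_power I 1) (k.-1 - 2 * j')) (ideal_pow (symbolic_power I 2) j') z ->
   ideal_pow I k (y * z).
  move=> j j' hj hj' y z Ty Tz.
  have Ty' := mul_mono (pow_mono_base J1I) (fun x (h : ideal_pow (symbolic_power I 2) j x) => h) Ty.
  have Tz' := mul_mono (pow_mono_base J1I) (fun x (h : ideal_pow (symbolic_power I 2) j' x) => h) Tz.
  have AM : forall r x, ideal_pow I (k.-1 - 2 * j) x -> ideal_pow I (k.-1 - 2 * j) (r * x).
    by case: (pow_ideal I (k.-1 - 2 * j)).
  have hyz := mul_pairs AM Ty' Tz'.
  set p := (k.-1 - 2 * j)%N in hyz; set p' := (k.-1 - 2 * j')%N in hyz.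
  set Q := (j + j')%N.
  have le : (k <= p + p' + (Q + Q./2))%N.
    move: hj hj'; rewrite !mem_iota !add0n !ltnS !geq_half_double => hj hj'.
    have := odd_double_half Q; rewrite /p /p' /Q; move: (odd _) => b; case: b => /=; lia.
  apply: (@pow_mono_exp n K I _ _ le).
  apply: (mul_sub (pow_ideal I _)) hyz => a0 b ha hb.
  apply: pow_mul.
    by apply: (mul_sub (pow_ideal I _)) ha => u v hu hv; apply: pow_mul.
  apply: hJ2; by apply: (mul_sub (pow_ideal _ _)) hb => u v hu hv; apply: pow_mul.
have hY : forall y z, Y y -> Y z -> ideal_pow I k (y * z).
  have [I0k IDk IMk] := pow_ideal I k.
  pose Fj := fun j => ideal_mul (ideal_pow (symbolic_power I 1) (k.-1 - 2 * j))
                                 (ideal_pow (symbolic_power I 2) j).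
  pose s := iota 0 (k.-1./2).+1.
  move=> y z /(hgen k.-1) hy /(hgen k.-1) hz.
  apply: (@sum_sub n K _ s Fj (fun y => forall z, ideal_sum (map Fj s) z -> ideal_pow I k (y * z)) _ _ _ y hy z hz).
  - by move=> z0 _; rewrite mul0r.
  - by move=> a0 b ha hb z0 hz0; rewrite mulrDl; apply: IDk; [apply: ha | apply: hb].
  move=> j hj y0 Ty z0 hz0.
  apply: (@sum_sub n K _ s Fj (fun z => ideal_pow I k (y0 * z)) _ _ _ z0 hz0).
  - by rewrite mulr0.
  - by move=> a0 b ha hb; rewrite mulrDr; apply: IDk.
  by move=> j' hj' z1 Tz; exact: core j j' hj hj' y0 z1 Ty Tz.
apply: (mul_sub (pow_ideal I k)) => u z hu Yz.
apply: (mul_sub_r (pow_ideal I k)) hu => r y _ Yy.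
rewrite -mulrA; case: (pow_ideal I k) => _ _; apply; exact: hY.
Qed.
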